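(* Let $\mathcal{W}$ be an $(\ell-1)$-dimensional vector space over a field of prime characteristic $\ell \ge 5$, and let $A$ be a unipotent linear operator on $\mathcal{W}$ whose Jordan form consists of a single Jordan block of size $\ell-1$. If $r$ is an integer with $2 \le r \le \ell-3$, then $(\wedge^r(A)-1)^{\ell-1} \ne 0$.
   Context: $\wedge^r(A)$ denotes the operator on $\wedge^r(\mathcal{W})$ induced by $A$. *)

(* Defs.v *)
From HB Require Import structures.
From mathcomp Require Import all_boot all_order all_algebra.
Set Implicit Arguments. Unset Strict Implicit. Unset Printing Implicit Defensive.
Import GRing.Theory.
Local Open Scope ring_scope.

Definition jordan_block (R : nzRingType) (n : nat) (a : R) : 'M[R]_n :=
  \matrix_(i, j) (a *+ (i == j :> nat) + ((j : nat) == i.+1)%:R).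

(* r-element subsets of {0,...,n-1}: they index the standard basis
   e_{i_1} /\ ... /\ e_{i_r} (i_1 < ... < i_r) of the r-th exterior power. *)
Definition rsubset (n r : nat) := {S : {set 'I_n} | #|S| == r}.

(* the a-th element (in increasing order) of an r-subset *)
Definition subset_ord (n r : nat) (S : rsubset n r) (a : 'I_r) : 'I_n :=
  @enum_val _ (mem (val S)) (cast_ord (esym (eqP (valP S))) a).

(* Matrix of /\^r(A) in the basis indexed by r-subsets: the (I,J) entry is the
   r x r minor of A with rows I and columns J (r-th compound matrix). *)
Definition ext_power (R : comNzRingType) (n r : nat) (A : 'M[R]_n)
  : 'M[R]_#|{: rsubset n r}| :=
  \matrix_(i, j) \det (\matrix_(a < r, b < r)
      A (subset_ord (enum_val i) a) (subset_ord (enum_val j) b)).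

(* matrix power, usable for square matrices of any size *)
Definition mxpow (R : nzRingType) (m : nat) (B : 'M[R]_m) (k : nat) : 'M[R]_m :=
  iter k (mulmx B) 1%:M.

(* Main.v *)
Require Import Defs.
From HB Require Import structures.
From mathcomp Require Import all_boot all_order all_algebra all_fingroup.
From mathcomp Require Import zify ring.
Import GRing.Theory.
Local Open Scope ring_scope.

Lemma so_mem n r (S : rsubset n r) a : subset_ord S a \in val S.
Proof. exact: enum_valP. Qed.

Lemma so_inj n r (S : rsubset n r) : injective (subset_ord S).
Proof. by move=> a b /enum_val_inj h; apply: (cast_ord_inj h). Qed.

Lemma so_surj n r (S : rsubset n r) x : x \in val S -> exists a, subset_ord S a = x.
Proof.
move=> xS; exists (cast_ord (eqP (valP S)) (enum_rank_in xS x)).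
by rewrite /subset_ord cast_ordK; apply: enum_rankK_in.
Qed.

Lemma cauchy_binet (R : comNzRingType) n r (X : 'M[R]_(r,n)) (Y : 'M[R]_(n,r)) :
  \det (X *m Y) = \sum_(S : rsubset n r)
     \det (\matrix_(a,b) X a (subset_ord S b)) * \det (\matrix_(a,b) Y (subset_ord S a) b).
Proof.
pose G (f : {ffun 'I_r -> 'I_n}) :=
  (\prod_a X a (f a)) * \det (\matrix_(a,b) Y (f a) b).
have step1 : \det (X *m Y) = \sum_f G f.
  rewrite /determinant.
  transitivity (\sum_(s : 'S_r) \sum_(f : {ffun 'I_r -> 'I_n})
      (-1) ^+ s * ((\prod_a X a (f a)) * \prod_a Y (f a) (s a))).
    apply: eq_bigr => s _; rewrite -big_distrr /=; congr (_ * _).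
    rewrite (eq_bigr (fun a => \sum_j X a j * Y j (s a))); last first.
      by move=> a _; rewrite mxE.
    rewrite bigA_distr_bigA /=; apply: eq_bigr => f _.
    by rewrite big_split.
  rewrite exchange_big /=; apply: eq_bigr => f _.
  rewrite /G /determinant big_distrr /=; apply: eq_bigr => s _.
  rewrite mulrCA; congr (_ * (_ * _)).
  by apply: eq_bigr => a _; rewrite mxE.
pose phi (q : rsubset n r * 'S_r) : {ffun 'I_r -> 'I_n} :=
  [ffun a => subset_ord q.1 (q.2 a)].
have step2 : forall S, \det (\matrix_(a,b) X a (subset_ord S b)) *
     \det (\matrix_(a,b) Y (subset_ord S a) b) = \sum_(p : 'S_r) G (phi (S, p)).
  move=> S; rewrite {1}/determinant big_distrl /=; apply: eq_bigr => p _.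
  rewrite /G /phi /=.
  have -> : \matrix_(a, b) Y ([ffun a0 => subset_ord S (p a0)] a) b =
            perm_mx p *m \matrix_(a,b) Y (subset_ord S a) b.
    by rewrite -row_permE; apply/matrixP => a b; rewrite !mxE ffunE.
  rewrite det_mulmx det_perm.
  have -> : \prod_(a<r) X a ([ffun a0 => subset_ord S (p a0)] a) =
     \prod_i (\matrix_(a,b) X a (subset_ord S b)) i (p i).
    by apply: eq_bigr => a _; rewrite mxE ffunE.
  by rewrite [RHS]mulrCA mulrA.
rewrite step1 (eq_bigr _ (fun S _ => step2 S)) pair_big /=.
have phi_inj : injective phi.
  move=> [S p] [S' p'] /ffunP /= h.
  have sub : forall (S S' : rsubset n r) (p p' : 'S_r),
      (forall a, subset_ord S (p a) = subset_ord S' (p' a)) -> val S \subset val S'.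
    move=> T T' q q' hh; apply/subsetP => x /so_surj [b <-].
    have := hh (q^-1 b)%g; rewrite permKV => ->; exact: so_mem.
  have h1 : forall a, subset_ord S (p a) = subset_ord S' (p' a).
    by move=> a; have := h a; rewrite !ffunE.
  have eS : S = S'.
    apply: val_inj; apply/eqP; rewrite eqEsubset (sub _ _ _ _ h1) /=.
    by apply: (sub _ _ p' p) => a; rewrite h1.
  subst S'; congr (_, _); apply/permP => a; apply: (@so_inj _ _ S); exact: h1.
rewrite -(big_imset G (h := phi) (A := predT)); last by move=> x y _ _; apply: phi_inj.
rewrite [LHS](bigID (fun f => f \in [set phi x | x in predT])) /= addrC big1 ?add0r //.
move=> f fnot; rewrite /G.
case: (boolP (injectiveb f)) => [/injectiveP finj | /injectivePn [a1 [a2 ne12 e12]]]; last first.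
  by rewrite (determinant_alternate ne12) ?mulr0 // => b; rewrite !mxE e12.
exfalso; move/negP: fnot; apply.
have cardS : #|[set f a | a in [set: 'I_r]]| == r.
  by rewrite card_imset // cardsT card_ord.
pose S : rsubset n r := exist (fun A : {set 'I_n} => #|A| == r) _ cardS.
have memS : forall a, f a \in val S by move=> a; apply: imset_f; rewrite inE.
pose p0 (a : 'I_r) := odflt a [pick b | subset_ord S b == f a].
have p0E : forall a, subset_ord S (p0 a) = f a.
  move=> a; rewrite /p0; case: pickP => [b /eqP //|none].
  by have [b hb] := @so_surj _ _ S (f a) (memS a); have := none b; rewrite hb eqxx.
have p0_inj : injective p0.
  by move=> a b e; apply: finj; rewrite -!p0E e.
apply/imsetP; exists (S, perm p0_inj); first by [].
by apply/ffunP => a; rewrite /phi ffunE /= permE p0E.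
Qed.


Lemma ext_powerM (R : comNzRingType) n r (A B : 'M[R]_n) :
  ext_power r (A *m B) = ext_power r A *m ext_power r B.
Proof.
apply/matrixP => i j; rewrite !mxE.
set I := enum_val i; set K := enum_val j.
have -> : \matrix_(a, b) (A *m B) (subset_ord I a) (subset_ord K b) =
   (\matrix_(a, c) A (subset_ord I a) c) *m (\matrix_(c, b) B c (subset_ord K b)).
  by apply/matrixP => a b; rewrite !mxE; apply: eq_bigr => c _; rewrite !mxE.
rewrite cauchy_binet [RHS](reindex (@enum_rank _)) /=; last first.
  by apply: onW_bij; apply: enum_rank_bij.
apply: eq_bigr => k _; rewrite !mxE !enum_rankK. congr (_ * _); congr (determinant _);
  by apply/matrixP => a b; rewrite !mxE.
Qed.

Lemma det_zero_col (R : comNzRingType) m (B : 'M[R]_m) b :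
  (forall a, B a b = 0) -> \det B = 0.
Proof.
move=> h; rewrite -det_tr (expand_det_row _ b) big1 // => a _.
by rewrite mxE h mul0r.
Qed.

Lemma det_zero_row (R : comNzRingType) m (B : 'M[R]_m) a :
  (forall b, B a b = 0) -> \det B = 0.
Proof.
by move=> h; rewrite (expand_det_row _ a) big1 // => b _; rewrite h mul0r.
Qed.

Lemma ext_power1 (R : comNzRingType) n r :
  ext_power r (1%:M : 'M[R]_n) = 1%:M.
Proof.
apply/matrixP => i j; rewrite !mxE.
case: (eqVneq i j) => [<-|ne].
  have -> : \matrix_(a, b) (1%:M : 'M[R]_n) (subset_ord (enum_val i) a)
                (subset_ord (enum_val i) b) = 1%:M.
    by apply/matrixP => a b; rewrite !mxE (inj_eq (@so_inj _ _ _)).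
  by rewrite det1.
have neIK : val (enum_val i) != val (enum_val j).
  apply: contra ne => /eqP e; apply/eqP; apply: enum_val_inj; exact: val_inj.
have [x xI xK] : exists2 x, x \in val (enum_val i) & x \notin val (enum_val j).
  apply/subsetPn; apply: contra neIK => sub.
  by rewrite eqEcard sub (eqP (valP (enum_val i))) (eqP (valP (enum_val j))) /=.
have [a ha] := @so_surj _ _ _ _ xI.
apply: (@det_zero_row _ _ _ a) => b; rewrite !mxE ha.
case: eqP => // e; move: xK; rewrite e; move/negP; case; exact: so_mem.
Qed.

Lemma mxpow_ext (R : comNzRingType) n r (M : 'M[R]_n) k :
  mxpow (ext_power r M) k = ext_power r (mxpow M k).
Proof.
elim: k => [|k IH] /=; first by rewrite ext_power1.
by rewrite IH ext_powerM.
Qed.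

Lemma transfer (F : fieldType) n r (U C : 'M[F]_n) k :
  U \in unitmx ->
  mxpow (ext_power r (invmx U *m C *m U) - 1%:M) k = 0 ->
  mxpow (ext_power r C - 1%:M) k = 0.
Proof.
move=> uU; rewrite !ext_powerM.
set EU := ext_power r U; set EV := ext_power r (invmx U); set EC := ext_power r C.
have h1 : EV *m EU = 1%:M by rewrite -ext_powerM mulVmx // ext_power1.
have h2 : EU *m EV = 1%:M by rewrite -ext_powerM mulmxV // ext_power1.
have key : forall j, mxpow (EV *m EC *m EU - 1%:M) j = EV *m mxpow (EC - 1%:M) j *m EU.
  elim=> [|j IH] /=; first by rewrite mulmx1 h1.
  rewrite IH.
  have -> : EV *m EC *m EU - 1%:M = EV *m (EC - 1%:M) *m EU.
    by rewrite mulmxBr mulmxBl mulmx1 h1.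
  by rewrite -!mulmxA (mulmxA EU) h2 mul1mx.
rewrite key => h.
have -> : mxpow (EC - 1%:M) k = EU *m (EV *m mxpow (EC - 1%:M) k *m EU) *m EV.
  by rewrite !mulmxA h2 mul1mx -mulmxA h2 mulmx1.
by rewrite h mulmx0 mul0mx.
Qed.


Lemma poly_pchar (F : fieldType) l : l \in [pchar F] ->
  ('X - 1 : {poly F}) ^+ l.-1 = \sum_(k < l) 'X^k.
Proof.
move=> hl.
have hl' : l \in [pchar {poly F}] by rewrite pchar_poly.
have l0 : (0 < l)%N by apply: prime_gt0; apply: (pcharf_prime hl).
have e1 : ('X - 1 : {poly F}) ^+ l = 'X^l - 1.
  have := pFrobenius_autB_comm hl' (x := 'X) (y := 1) (commr1 _).
  by rewrite !pFrobenius_autE expr1n.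
apply: (mulIf (x := 'X - 1)); first by rewrite -polyC1 polyXsubC_eq0.
rewrite -exprSr prednK // e1.
rewrite -(expr1n _ l) subrXX mulrC expr1n; congr (_ * _).
rewrite (reindex_inj rev_ord_inj) /=; apply: eq_bigr => i _.
rewrite expr1n mulr1; congr (_ ^+ _).
by have := ltn_ord i; lia.
Qed.

Lemma mxpow_pchar (F : fieldType) l m (G : 'M[F]_m) : l \in [pchar F] ->
  mxpow (G - 1%:M) l.-1 = \sum_(k < l) mxpow G k.
Proof.
move=> hl; case: m G => [|m] G; first by apply/matrixP => [[]].
have mxpowE : forall (B : 'M[F]_m.+1) k, mxpow B k = B ^+ k.
  by move=> B; elim=> [|k IH] //=; rewrite IH exprS mulmxE.
rewrite mxpowE (eq_bigr (fun k : 'I_l => G ^+ k)); last by move=> k _; rewrite mxpowE.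
have := congr1 (horner_mx G) (@poly_pchar _ _ hl).
rewrite rmorphXn rmorphB /= horner_mx_X rmorph1 rmorph_sum /= => ->.
by apply: eq_bigr => k _; rewrite rmorphXn /= horner_mx_X.
Qed.


Lemma binm1 (F : fieldType) l k : prime l -> l \in [pchar F] -> (k < l)%N ->
  ('C(l.-1, k))%:R = (-1) ^+ k :> F.
Proof.
move=> pl hl; elim: k => [_|k IH hk]; first by rewrite bin0 expr0.
have l1 := prime_gt1 pl.
have e : 'C(l.-1, k.+1) = ('C(l, k.+1) - 'C(l.-1, k))%N.
  by rewrite -{2}(prednK (ltnW l1)) binS addnK.
have hdiv : (l %| 'C(l, k.+1))%N by apply: prime_dvd_bin; rewrite //= hk.
have : 'C(l, k.+1)%:R = 0 :> F.
  by case/dvdnP: hdiv => q ->; rewrite natrM (pcharf0 hl) mulr0.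
have le : ('C(l.-1, k) <= 'C(l, k.+1))%N.
  by rewrite -{2}(prednK (ltnW l1)) binS leq_addl.
rewrite e natrB // => ->; rewrite IH ?(ltnW hk) //.
by rewrite exprS sub0r mulN1r.
Qed.

Lemma sum_delta (R : nzRingType) n (g : nat -> R) c :
  \sum_(t < n) (t == c :> nat)%:R * g t = (c < n)%:R * g c.
Proof.
case: (ltnP c n) => hc.
  rewrite (bigD1 (Ordinal hc)) //= eqxx !mul1r big1 ?addr0 // => t ht.
  have -> : (t == c :> nat) = false.
    by apply/negbTE; apply: contra ht => /eqP e; apply/eqP; apply: val_inj.
  by rewrite mul0r.
rewrite mul0r big1 // => t _.
have -> : (t == c :> nat) = false by apply/negbTE; rewrite neq_ltn (leq_trans (ltn_ord t) hc).
by rewrite mul0r.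
Qed.

Definition Mm (F : fieldType) n : 'M[F]_n :=
  \matrix_(i, t) ((t == i.+1 :> nat)%:R - (t == 0 :> nat)%:R).
Definition sg n k j := if (k <= j)%N then (j - k)%N else (j + n.+1 - k)%N.
Definition wf (F : fieldType) n k i j : F := (i == sg n k j)%:R - (sg n k j == n)%:R.
Definition Wm (F : fieldType) n k : 'M[F]_n := \matrix_(i, j) wf F n k i j.

Ltac decide_bools :=
  repeat match goal with
  | |- context [ (?x == ?y :> nat) ] =>
      first [ rewrite (_ : (x == y) = true); [| by apply/eqP; lia]
            | rewrite (_ : (x == y) = false); [| by apply/eqP; lia] ]
  | |- context [ (?x < ?y)%N ] =>
      first [ rewrite (_ : (x < y)%N = true); [| by lia]
            | rewrite (_ : (x < y)%N = false); [| by lia] ]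
  end.

Lemma mxpowM (F : fieldType) n k : (k <= n)%N -> mxpow (Mm F n) k = Wm F n k.
Proof.
elim: k => [_|k IH hk] /=.
  apply/matrixP => i j; rewrite !mxE /wf /sg /=.
  have := ltn_ord i; have := ltn_ord j; rewrite subn0.
  by move=> hj hi; rewrite (_ : (nat_of_ord j == n) = false) ?subr0 //; lia.
rewrite IH ?(ltnW hk) //; apply/matrixP => i j; rewrite !mxE.
rewrite (eq_bigr (fun t : 'I_n => (t == i.+1 :> nat)%:R * wf F n k t j
     - (t == 0 :> nat)%:R * wf F n k t j)); last first.
  by move=> t _; rewrite !mxE mulrBl.
rewrite sumrB !(@sum_delta _ n (fun t => wf F n k t j)).
have hi := ltn_ord i; have hj := ltn_ord j.
have hs : sg n k.+1 j = if sg n k j == 0%N then n else (sg n k j).-1.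
  rewrite /sg; case: ifP; case: ifP; case: ifP; lia.
have hsn : (sg n k j <= n)%N by rewrite /sg; case: ifP; lia.
rewrite /wf hs; move: (sg n k j) hsn => s hsn.
case: (ltnP i.+1 n) => hin; case: (ltngtP i.+1 s) => his;
  case: (ltngtP s n) => hsn'; case: (posnP s) => hs0;
  first [ exfalso; lia | decide_bools; rewrite /= ?mulr0n ?mulr1n; ring ].
Qed.


Definition qf (F : fieldType) N (i j : nat) : F := (-1) ^+ (i - j) * ('C(N - j, N - i))%:R.
Definition Qm (F : fieldType) N : 'M[F]_N.+1 := \matrix_(i, j) qf F N i j.

Lemma QJ (F : fieldType) N : prime N.+2 -> N.+2 \in [pchar F] -> odd N ->
  Qm F N *m jordan_block N.+1 1 = Mm F N.+1 *m Qm F N.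
Proof.
move=> pl hl oN; apply/matrixP => i j; rewrite !mxE.
rewrite [RHS](eq_bigr (fun t : 'I_N.+1 => (t == i.+1 :> nat)%:R * qf F N t j
     - (t == 0 :> nat)%:R * qf F N t j)); last first.
  by move=> t _; rewrite !mxE mulrBl.
rewrite sumrB !(@sum_delta _ N.+1 (fun t => qf F N t j)) /=.
rewrite (eq_bigr (fun t : 'I_N.+1 => (t == j :> nat)%:R * qf F N i t
     + (j == t.+1 :> nat)%:R * qf F N i t)); last first.
  by move=> t _; rewrite !mxE; ring.
rewrite big_split /= (@sum_delta _ N.+1 (fun t => qf F N i t)) /= ltn_ord mul1r.
have hi := ltn_ord i; have hj := ltn_ord j.
move: (nat_of_ord i) (nat_of_ord j) hi hj => {i j} i j hi hj.
have q00 : qf F N 0 0 = 1 by rewrite /qf subn0 binn expr0 mulr1.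
case: j hj => [|j] hj.
  rewrite big1; last by move=> t _; rewrite mul0r.
  rewrite addr0 q00 mul1r.
  case: (ltnP i.+1 N.+1) => hin; rewrite /=.
    rewrite mul1r /qf !subn0.
    have e : 'C(N, N - i) = ('C(N.+1, N - i) - 'C(N, N - i.+1))%N.
      by rewrite (_ : (N - i = (N - i.+1).+1)%N); [rewrite binS addnK|lia].
    have le : ('C(N, N - i.+1) <= 'C(N.+1, N - i))%N.
      by rewrite (_ : (N - i = (N - i.+1).+1)%N); [rewrite binS leq_addl|lia].
    rewrite e natrB // (@binm1 F N.+2 (N - i) pl hl); last by lia.
    rewrite mulrBr exprS.
    have -> : ((-1) ^+ i * (-1) ^+ (N - i) : F) = -1.
      by rewrite -exprD subnKC ?(ltnW hin) // -signr_odd oN.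
    ring.
  have -> : i = N by lia.
  by rewrite mul0r /qf subn0 subnn bin0 mulr1 -signr_odd oN sub0r.
rewrite (eq_bigr (fun t : 'I_N.+1 => (t == j :> nat)%:R * qf F N i t)); last first.
  by move=> t _; rewrite eqSS eq_sym.
rewrite (@sum_delta _ N.+1 (fun t => qf F N i t)) (_ : (j < N.+1)%N) ?mul1r; last by lia.
have -> : qf F N 0 j.+1 = 0 by rewrite /qf bin_small ?mulr0 //; lia.
rewrite subr0.
case: (ltngtP i j) => hij.
- have h1 : 'C(N - j.+1, N - i) = 0%N by apply: bin_small; lia.
  have h2 : 'C(N - j, N - i) = 0%N by apply: bin_small; lia.
  have h3 : 'C(N - j.+1, N - i.+1) = 0%N by apply: bin_small; lia.
  by rewrite /qf h1 h2 h3 !mulr0 addr0.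
- have ea : (N - j = (N - j.+1).+1)%N by lia.
  have ed : (i - j = (i - j.+1).+1)%N by lia.
  rewrite /qf subSS ea ed.
  case: (ltnP i N) => hiN.
    have eb : (N - i = (N - i.+1).+1)%N by lia.
    rewrite (_ : (i.+1 < N.+1)%N) ?mul1r; last by lia.
    rewrite eb binS natrD exprS; ring.
  have -> : (N - i = 0)%N by lia.
  rewrite (_ : (i.+1 < N.+1)%N = false) ?mul0r; last by lia.
  by rewrite !bin0 exprS; ring.
- subst i; rewrite (_ : (j.+1 < N.+1)%N) ?mul1r; last by lia.
  rewrite /qf subnn !binn bin_small ?mulr0; last by lia.
  by rewrite subnn add0r.
Qed.


Lemma Q_unit (F : fieldType) N : Qm F N \in unitmx.
Proof.
rewrite unitmxE det_trig.
  by rewrite big1 ?unitr1 // => i _; rewrite mxE /qf subnn binn mulr1 expr0.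
apply/is_trig_mxP => i j lt; rewrite mxE /qf bin_small ?mulr0 //; have := ltn_ord j; lia.
Qed.

Lemma entry (F : fieldType) n r : (2 <= r)%N -> (r.+2 <= n)%N ->
  exists i0 : 'I_#|{: rsubset n r}|, forall k, (k <= n)%N ->
     (ext_power r (Wm F n k)) i0 i0 = (k == 0)%:R.
Proof.
move=> hr2 hrn2.
have hrn : (r < n)%N by lia.
pose h (a : 'I_r) : 'I_n := Ordinal (leq_ltn_trans (ltn_ord a) hrn).
have hinj : injective h by move=> a b /(congr1 val) /= [] /val_inj.
have cardS : #|[set h a | a in [set: 'I_r]]| == r.
  by rewrite card_imset // cardsT card_ord.
pose X0 : rsubset n r := exist (fun A : {set 'I_n} => #|A| == r) _ cardS.
have memX : forall x : 'I_n, x \in val X0 -> (0 < x <= r)%N.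
  by move=> x /imsetP [a _ ->] /=; apply: ltn_ord.
have inX : forall x : 'I_n, (0 < x <= r)%N -> x \in val X0.
  move=> x hx; apply/imsetP.
  have ha : (x.-1 < r)%N by lia.
  exists (Ordinal ha); first by rewrite inE.
  by apply: val_inj => /=; lia.
exists (enum_rank X0) => k hk; rewrite mxE enum_rankK.
set s := subset_ord X0.
have sr : forall a, (0 < s a <= r)%N by move=> a; apply: memX; apply: so_mem.
case: k hk => [|k] hk.
  have -> : \matrix_(a, b) Wm F n 0 (s a) (s b) = 1%:M.
    apply/matrixP => a b; rewrite !mxE /wf /sg /= subn0.
    rewrite (_ : (nat_of_ord (s b) == n) = false) ?subr0; last by have := sr b; lia.
    case: (eqVneq a b) => [<-|ne]; first by rewrite !eqxx.
    rewrite (_ : (nat_of_ord (s a) == s b) = false) //.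
    apply/negbTE; apply: contra ne => /eqP e; apply/eqP; apply: (@so_inj _ _ X0).
    exact: val_inj.
  by rewrite det1.
have [x [hx hxs]] : exists x, (0 < x <= r)%N /\ ((sg n k.+1 x == 0)%N || (r < sg n k.+1 x < n)%N).
  case: (leqP k.+1 r) => h1.
    by exists k.+1; rewrite /sg leqnn subnn; lia.
  case: (eqVneq k r) => h2.
    by exists r.-1; rewrite /sg ifF; [lia| apply/negbTE; rewrite -ltnNge; lia].
  by exists r; rewrite /sg ifF; [lia | apply/negbTE; rewrite -ltnNge; lia].
have hxn : (x < n)%N by lia.
have [b hb] := @so_surj _ _ X0 (Ordinal hxn) (inX (Ordinal hxn) hx).
rewrite -/s in hb; rewrite (@det_zero_col _ _ _ b) // => a; rewrite !mxE /wf hb /=.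
have := sr a; move: hxs; move: (sg n k.+1 x) => t ht hsa.
rewrite (_ : (nat_of_ord (s a) == t) = false); last by lia.
by rewrite (_ : (t == n) = false) ?subr0 //; lia.
Qed.


Theorem lemma3p10 (F : fieldType) (l r : nat) (A : 'M[F]_(l.-1)) :
  prime l -> (5 <= l)%N -> l \in [pchar F] ->
  (exists P : 'M[F]_(l.-1),
      P \in unitmx /\ A = invmx P *m jordan_block (l.-1) 1 *m P) ->
  (2 <= r)%N -> (r <= l - 3)%N ->
  mxpow (ext_power r A - 1%:M) (l.-1) != 0.
Proof.
move=> pl l5 hl [P [uP eA]] r2 rl.
have [N eN] : exists N, l = N.+2 by exists (l - 2)%N; lia.
subst l.
have oN : odd N.
  by case: (even_prime pl) => [|/=]; [lia | rewrite negbK].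
apply/negP => /eqP H.
rewrite eA in H.
have HJ : mxpow (ext_power r (jordan_block (R:=F) N.+1 1) - 1%:M) N.+1 = 0.
  exact: (@transfer _ _ _ _ _ _ uP H).
have eJ : jordan_block N.+1 1 = invmx (Qm F N) *m Mm F N.+1 *m Qm F N.
  by rewrite -mulmxA -QJ // mulKmx // Q_unit.
rewrite eJ in HJ; have HM := @transfer _ _ _ _ _ _ (Q_unit F N) HJ.
have HS : mxpow (ext_power r (Mm F N.+1) - 1%:M) N.+1 =
    \sum_(k < N.+2) mxpow (ext_power r (Mm F N.+1)) k := @mxpow_pchar F N.+2 _ _ hl.
rewrite HM in HS.
have [i0 hi0] := @entry F N.+1 r r2 ltac:(lia).
move/matrixP: HS => /(_ i0 i0); rewrite mxE summxE big_ord_recl.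
rewrite mxpow_ext (@mxpowM F N.+1 0 (leq0n _)) hi0 // big1 ?addr0 ?oner_eq0 //.
  by move/eqP; rewrite eq_sym oner_eq0.
move=> k _; have hk : (lift ord0 k <= N.+1)%N by rewrite lift0; have := ltn_ord k; lia.
by rewrite mxpow_ext (@mxpowM F N.+1 _ hk) hi0 // lift0.
Qed.
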